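(* Let $\theta_0>0$ and let $F_N=\sum_{j=1}^N w_j\delta_{z_j}$ and $F'_{N'}=\sum_{j=1}^{N'}w'_j\delta_{z'_j}$ be probability measures on $(0,\infty)$. Then for every $K\le\min(N,N')$, \[ \|p_{\theta_0,F_N}-p_{\theta_0,F'_{N'}}\|_1\le 4\max_{1\le j\le K}\frac{|z_j-z'_j|}{z_j}+\sum_{j=1}^K|w_j-w'_j|+\sum_{j=K+1}^N w_j+\sum_{j=K+1}^{N'}w'_j. \]
   Context: For $\theta>0$ and a probability measure $F$ on $(0,\infty)$, $p_{\theta,F}(x,y)=\int z^2\theta e^{-z(x+\theta y)}\,dF(z)$ for $(x,y)\in(0,\infty)^2$. $\|\cdot\|_1$ is the $L^1$ norm with respect to Lebesgue measure on $(0,\infty)^2$. *)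

(* Defs.v *)
From HB Require Import structures.
From mathcomp Require Import all_boot all_order all_algebra.
From mathcomp Require Import all_classical all_reals all_analysis.
Set Implicit Arguments. Unset Strict Implicit. Unset Printing Implicit Defensive.
Import Order.TTheory GRing.Theory Num.Theory.
Local Open Scope ring_scope.

(* Density p_{theta,F}(x,y) = \int z^2 theta e^{-z(x+theta y)} dF(z) for the
   finite discrete mixing measure F = \sum_{j<N} w j \delta_{z j}
   (the integral against this measure is literally this finite sum). *)
Definition pmix (R : realType) (N : nat) (w z : nat -> R) (theta : R)
  (q : R * R) : R :=
  \sum_(j < N) w j * (z j ^+ 2 * theta * expR (- (z j * (q.1 + theta * q.2)))).

Definition is_prob_atoms (R : realType) (N : nat) (w z : nat -> R) : Prop :=
  (forall j, (j < N)%N -> 0 <= w j) /\ (forall j, (j < N)%N -> 0 < z j) /\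
  \sum_(j < N) w j = 1.

Definition quadrant (R : realType) : set (R * R) :=
  [set q | 0 < q.1 /\ 0 < q.2].

(* Main.v *)
Require Import Defs.
From HB Require Import structures.
From mathcomp Require Import all_boot all_order all_algebra.
From mathcomp Require Import all_classical all_reals all_analysis.
From mathcomp Require Import measurable_realfun.
From mathcomp Require Import ring lra.
Import Order.TTheory GRing.Theory Num.Theory.
Import numFieldTopology.Exports.
Local Open Scope classical_set_scope.
Local Open Scope ring_scope.

Section S.
Context {R : realType}.
Notation leb := (@lebesgue_measure R).
Notation mu2 := ((@lebesgue_measure R) \x (@lebesgue_measure R))%E.

Definition ee (th c : R) (q : R * R) : R :=
  c ^+ 2 * th * expR (- (c * (q.1 + th * q.2))).

Lemma quadrantE : @quadrant R = `]0, +oo[%classic `*` `]0, +oo[%classic.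
Proof. by apply/seteqP; split => q /=; rewrite !in_itv /= !andbT. Qed.

Ltac mq := rewrite quadrantE; apply: measurableX; exact: measurable_itv.

Lemma measurable_ee th c : measurable_fun setT (ee th c).
Proof.
rewrite /ee.
apply: measurable_funM; first exact: measurable_cst.
apply: measurableT_comp; first exact: measurable_expR.
apply: measurable_funN.
apply: measurable_funM; first exact: measurable_cst.
apply: measurable_funD; first exact: measurable_fst.
apply: measurable_funM; first exact: measurable_cst.
exact: measurable_snd.
Qed.

Definition ex1 (r t : R) : R := r * expR (- (r * t)).

Definition ex1p (r : R) := ex1 r \_ `]0, +oo[%classic.

Lemma exp1 (r : R) : 0 < r ->
  (\int[leb]_x (ex1p r x)%:E = 1)%E.
Proof.
move=> r0.
have mf : measurable_fun setT (ex1 r).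
  apply: measurable_funM; first exact: measurable_cst.
  apply: measurableT_comp; first exact: measurable_expR.
  apply: measurable_funN; apply: measurable_funM; first exact: measurable_cst.
  exact: measurable_id.
transitivity (\int[leb]_(x in (`]0%R, +oo[%classic : set R)) (ex1 r x)%:E)%E.
  rewrite [RHS]integral_mkcond; apply: eq_integral => x _.
  by rewrite /ex1p !patchE; case: ifP.
rewrite (@integral_itv_obnd_cbnd _ 0 (BInfty R false) (fun x => (ex1 r x)%:E)); last first.
  by apply/measurable_EFinP; exact: measurable_funTS.
rewrite -(integral_exponential_pdf r0) [LHS]integral_mkcond.
apply: eq_integral => x _; rewrite !patchE; case: ifPn => //.
  rewrite inE /= in_itv /= andbT => x0.
  by rewrite exponential_pdfE // /ex1 mulNr.
rewrite notin_setE /= in_itv /= andbT => /negP; rewrite -ltNge => x0.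
by rewrite lt0_exponential_pdf.
Qed.


Lemma mex1p r : measurable_fun setT (ex1p r).
Proof.
apply/(measurable_restrictT _ _).1; first exact: measurable_itv.
apply: measurable_funTS.
apply: measurable_funM; first exact: measurable_cst.
apply: measurableT_comp; first exact: measurable_expR.
apply: measurable_funN; apply: measurable_funM; first exact: measurable_cst.
exact: measurable_id.
Qed.

Lemma ex1p_ge0 r t : 0 <= r -> 0 <= ex1p r t.
Proof.
move=> r0; rewrite /ex1p patchE; case: ifP => // _.
by rewrite /ex1 mulr_ge0 // expR_ge0.
Qed.

Lemma ee_ge0 th c q : 0 <= th -> 0 <= ee th c q.
Proof. by move=> th0; rewrite /ee; apply: mulr_ge0; [apply: mulr_ge0 => //; exact: sqr_ge0 | exact: expR_ge0]. Qed.

Lemma in_quad (x y : R) : ((x, y) \in @quadrant R) = (0 < x) && (0 < y).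
Proof. by apply/idP/andP => [/set_mem [] //| [] ? ?]; exact/mem_set. Qed.

Lemma in_pos (x : R) : (x \in (`]0, +oo[%classic : set R)) = (0 < x).
Proof. apply/idP/idP => [/set_mem|?]; rewrite /= ?in_itv /= ?andbT //. by apply/mem_set; rewrite /= in_itv /= andbT. Qed.

Lemma int_ee th c : 0 < th -> 0 < c ->
  (\int[mu2]_(q in @quadrant R) (ee th c q)%:E = 1)%E.
Proof.
move=> th0 c0.
rewrite integral_mkcond.
have -> : (fun q => (ee th c q)%:E) \_ (@quadrant R) =
   (fun q => (ex1p c q.1 * ex1p (c * th) q.2)%:E).
  apply/funext => -[x y]; rewrite patchE /ex1p !patchE in_quad /= !in_pos.
  have [x0|x0] := ltP 0 x; have [y0|y0] := ltP 0 y => /=; rewrite ?mulr0 ?mul0r //.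
  rewrite /ee /ex1 /=; congr (_%:E).
  rewrite (_ : - (c * (x + th * y)) = - (c * x) + - (c * th * y)); last by ring.
  rewrite expRD; ring.
rewrite fubini_tonelli1 //; last first.
- by move=> q; rewrite lee_fin mulr_ge0 // ex1p_ge0 // ?mulr_ge0 // ltW.
- apply/measurable_EFinP; apply: measurable_funM.
    by apply: measurableT_comp; [exact: mex1p | exact: measurable_fst].
  by apply: measurableT_comp; [exact: mex1p | exact: measurable_snd].
rewrite /fubini_F /=.
transitivity (\int[leb]_x (ex1p c x)%:E)%E; last exact: exp1.
apply: eq_integral => x _.
under eq_integral do rewrite EFinM.
rewrite ge0_integralZl //.
- by rewrite exp1 ?mule1 // mulr_gt0.
- by apply/measurable_EFinP; exact: mex1p.
- by move=> y _; rewrite lee_fin ex1p_ge0 // ltW // mulr_gt0.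
- by rewrite lee_fin ex1p_ge0 // ltW.
Qed.

Lemma integrable_ee th c : 0 < th -> 0 < c ->
  mu2.-integrable (@quadrant R) (fun q => (ee th c q)%:E).
Proof.
move=> th0 c0; apply/integrableP; split.
  by apply/measurable_EFinP; apply: measurable_funTS; exact: measurable_ee.
under eq_integral do rewrite /= ger0_norm ?ee_ge0 ?(ltW th0) //.
by rewrite int_ee // ltry.
Qed.


Definition HI (f : R * R -> R) (v : R) :=
  mu2.-integrable (@quadrant R) (fun q => (f q)%:E) /\
  (\int[mu2]_(q in @quadrant R) (f q)%:E = v%:E)%E.

Lemma HI_ee th c : 0 < th -> 0 < c -> HI (ee th c) 1.
Proof. by move=> th0 c0; split; [exact: integrable_ee | exact: int_ee]. Qed.

Lemma HI_scale f v a : HI f v -> HI (fun q => a * f q) (a * v).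
Proof.
move=> [i1 i2]; rewrite /HI.
have -> : (fun q => (a * f q)%:E) = (fun q => a%:E * (f q)%:E)%E.
  by apply/funext => q; rewrite EFinM.
split; first by apply: integrableZl i1; mq.
rewrite integralZl //; last by mq.
by rewrite i2 EFinM.
Qed.

Lemma HI_add f g u v : HI f u -> HI g v -> HI (fun q => f q + g q) (u + v).
Proof.
move=> [i1 e1] [i2 e2]; rewrite /HI.
have -> : (fun q => (f q + g q)%:E) = (fun q => (f q)%:E + (g q)%:E)%E.
  by apply/funext => q; rewrite EFinD.
split; first by apply: integrableD => //; mq.
rewrite integralD //; last by mq.
by rewrite e1 e2 EFinD.
Qed.

Lemma HI_0 : HI (fun=> 0) 0.
Proof.
rewrite /HI; split; first exact: integrable0.
exact: integral0.
Qed.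

Lemma HI_sum (I : eqType) (s : seq I) (P : pred I) (F : I -> R * R -> R) (v : I -> R) :
  (forall i, i \in s -> HI (F i) (v i)) ->
  HI (fun q => \sum_(i <- s | P i) F i q) (\sum_(i <- s | P i) v i).
Proof.
elim: s => [|a t IH] h.
  rewrite big_nil.
  have -> : (fun q => \sum_(i <- [::] | P i) F i q) = fun=> 0.
    by apply/funext => q; rewrite big_nil.
  exact: HI_0.
have IH' : HI (fun q => \sum_(i <- t | P i) F i q) (\sum_(i <- t | P i) v i).
  by apply: IH => i it; apply: h; rewrite inE it orbT.
have ha := h a (mem_head a t).
rewrite big_cons.
have -> : (fun q => \sum_(i <- a :: t | P i) F i q) =
  fun q => (if P a then F a q else 0) + \sum_(i <- t | P i) F i q.
  by apply/funext => q; rewrite big_cons; case: (P a); rewrite ?add0r.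
case: (P a); last by rewrite -[X in HI _ X]add0r; apply: HI_add => //; exact: HI_0.
exact: HI_add.
Qed.

Lemma HI_sub f g u v : HI f u -> HI g v -> HI (fun q => f q - g q) (u - v).
Proof.
move=> h1 h2.
have -> : (fun q => f q - g q) = (fun q => f q + (-1) * g q).
  by apply/funext => q; rewrite mulN1r.
have -> : u - v = u + (-1) * v by rewrite mulN1r.
by apply: HI_add => //; exact: HI_scale.
Qed.

Lemma ee_diff_le th a b q : 0 < th -> 0 < a -> a <= b -> 0 <= q.1 + th * q.2 ->
  `|ee th a q - ee th b q| <= ee th a q + (1 - 2 * a ^+ 2 / b ^+ 2) * ee th b q.
Proof.
move=> th0 a0 ab u0.
have b0 : 0 < b by apply: lt_le_trans ab.
rewrite /ee; set u := q.1 + th * q.2 in u0 *.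
set Ea := expR (- (a * u)); set Eb := expR (- (b * u)).
have EbEa : Eb <= Ea.
  by rewrite /Ea /Eb ler_expR lerN2; apply: ler_wpM2r.
have Eb0 : 0 <= Eb by exact: expR_ge0.
have -> : (1 - 2 * a ^+ 2 / b ^+ 2) * (b ^+ 2 * th * Eb) = b ^+ 2 * th * Eb - 2 * a ^+ 2 * th * Eb.
  by field; rewrite ?expf_neq0 // gt_eqF.
have h1 : 0 <= a ^+ 2 * th * (Ea - Eb).
  by apply: mulr_ge0; [apply: mulr_ge0; [exact: sqr_ge0 | exact: ltW] | rewrite subr_ge0].
have h2 : 0 <= (b ^+ 2 - a ^+ 2) * th * Eb.
  apply: mulr_ge0 => //; apply: mulr_ge0; last exact: ltW.
  by rewrite subr_ge0 ler_sqr // ?nnegrE ltW.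
rewrite ler_norml; apply/andP; split; nra.
Qed.

Lemma ee_diff th a b q : 0 < th -> 0 < a -> 0 < b -> 0 <= q.1 + th * q.2 ->
  `|ee th a q - ee th b q| <= ee th (Num.min a b) q +
     (1 - 2 * (Num.min a b) ^+ 2 / (Num.max a b) ^+ 2) * ee th (Num.max a b) q.
Proof.
move=> th0 a0 b0 u0; case: (lerP a b) => ab.
  exact: ee_diff_le.
by rewrite distrC; apply: ee_diff_le => //; exact: ltW.
Qed.


Lemma coef_le (a b : R) : 0 < a -> 0 < b ->
  1 + (1 - 2 * (Num.min a b) ^+ 2 / (Num.max a b) ^+ 2) <= 4 * (`|a - b| / a).
Proof.
move=> a0 b0; rewrite -subr_ge0.
have an : a != 0 by rewrite gt_eqF.
have bn : b != 0 by rewrite gt_eqF.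
case: (lerP a b) => ab.
  have -> : 4 * ((b - a) / a) - (1 + (1 - 2 * a ^+ 2 / b ^+ 2)) =
     2 * (b - a) ^+ 2 * (2 * b + a) / (a * b ^+ 2).
    by field; rewrite an bn.
  apply: divr_ge0; last by apply: mulr_ge0; [exact: ltW | exact: sqr_ge0].
  by apply: mulr_ge0; [apply: mulr_ge0 => //; exact: sqr_ge0 | nra].
have -> : 4 * ((a - b) / a) - (1 + (1 - 2 * b ^+ 2 / a ^+ 2)) =
   2 * (a - b) ^+ 2 / a ^+ 2.
  by field; rewrite an.
apply: divr_ge0; last exact: sqr_ge0.
by apply: mulr_ge0 => //; exact: sqr_ge0.
Qed.

End S.

Ltac mq := rewrite quadrantE; apply: measurableX; exact: measurable_itv.

Local Open Scope ereal_scope.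

Theorem mainTheorem6 (R : realType) (theta0 : R) (N N' K : nat)
  (w z w' z' : nat -> R) :
  (0 < theta0)%R ->
  is_prob_atoms N w z -> is_prob_atoms N' w' z' ->
  (K <= minn N N')%N ->
  \int[(@lebesgue_measure R) \x (@lebesgue_measure R)]_(q in @quadrant R)
     (`| pmix N w z theta0 q - pmix N' w' z' theta0 q |)%:E
  <= (4 * \big[Num.max/0%R]_(j < K) (`| z j - z' j | / z j)
      + \sum_(j < K) `| w j - w' j |
      + \sum_(K <= j < N) w j
      + \sum_(K <= j < N') w' j)%:E.
Proof.
move=> th0 [w0 [z0 sw]] [w0' [z0' sw']] KNN.
have /andP[KN KN'] : (K <= N)%N && (K <= N')%N by rewrite -leq_min.
pose m j := Num.min (z j) (z' j).
pose M j := Num.max (z j) (z' j).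
pose c j := (1 - 2 * m j ^+ 2 / M j ^+ 2)%R.
have zK j : (j < K)%N -> (0 < z j)%R /\ (0 < z' j)%R.
  move=> jK; split; [apply: z0 | apply: z0']; exact: leq_trans jK _.
have mK j : (j < K)%N -> (0 < m j)%R /\ (0 < M j)%R.
  move=> /zK [h1 h2]; rewrite /m /M lt_min lt_max h1 h2; done.
pose B q := (\sum_(j < K) (`|w j - w' j| * ee theta0 (z j) q +
      w' j * (ee theta0 (m j) q + c j * ee theta0 (M j) q)) +
   \sum_(K <= j < N) w j * ee theta0 (z j) q +
   \sum_(K <= j < N') w' j * ee theta0 (z' j) q)%R.
pose vB := (\sum_(j < K) (`|w j - w' j| * 1 + w' j * (1 + c j * 1)) +
   \sum_(K <= j < N) w j * 1 + \sum_(K <= j < N') w' j * 1)%R.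
have HB : HI B vB.
  apply: HI_add; first apply: HI_add.
  - apply: (@HI_sum R _ _ _ (fun (j : 'I_K) q => (`|w j - w' j| * ee theta0 (z j) q +
      w' j * (ee theta0 (m j) q + c j * ee theta0 (M j) q))%R)) => j _.
    have [zj _] := zK j (ltn_ord j); have [mj Mj] := mK j (ltn_ord j).
    apply: HI_add; first by apply: HI_scale; exact: HI_ee.
    apply: HI_scale; apply: HI_add; first exact: HI_ee.
    by apply: HI_scale; exact: HI_ee.
  - apply: (@HI_sum R _ _ _ (fun j q => (w j * ee theta0 (z j) q)%R)) => j.
    rewrite mem_index_iota => /andP[_ jN].
    by apply: HI_scale; apply: HI_ee => //; exact: z0.
  - apply: (@HI_sum R _ _ _ (fun j q => (w' j * ee theta0 (z' j) q)%R)) => j.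
    rewrite mem_index_iota => /andP[_ jN].
    by apply: HI_scale; apply: HI_ee => //; exact: z0'.
have Hp (n : nat) (ww zz : nat -> R) : (forall j, (j < n)%N -> 0 < zz j)%R ->
    HI (pmix n ww zz theta0) (\sum_(j < n) ww j * 1)%R.
  move=> hz.
  have -> : pmix n ww zz theta0 = (fun q => \sum_(j < n) ww j * ee theta0 (zz j) q)%R by [].
  apply: (@HI_sum R _ _ _ (fun (j : 'I_n) q => (ww j * ee theta0 (zz j) q)%R)) => j _.
  by apply: HI_scale; apply: HI_ee => //; exact: hz.
have Hd := @HI_sub R _ _ _ _ (Hp N w z z0) (Hp N' w' z' z0').
apply: (@le_trans _ _ (vB%:E)).
  rewrite -HB.2.
  apply: le_integral.
  - by mq.
  - exact: (integrable_norm Hd.1).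
  - exact: HB.1.
  move=> q /set_mem [x0 y0]; rewrite lee_fin.
  have u0 : (0 <= q.1 + theta0 * q.2)%R.
    by apply: addr_ge0; [exact: ltW | apply: mulr_ge0; exact: ltW].
  have spl (n : nat) (ww zz : nat -> R) : (K <= n)%N ->
      pmix n ww zz theta0 q = (\sum_(j < K) ww j * ee theta0 (zz j) q +
        \sum_(K <= j < n) ww j * ee theta0 (zz j) q)%R.
    by move=> Kn; rewrite /pmix /= -!(big_mkord xpredT (fun j => ww j * ee theta0 (zz j) q)%R) (big_cat_nat (leq0n K) Kn).
  rewrite /= (spl N w z KN) (spl N' w' z' KN') /B.
  set S1 := (\sum_(j < K) w j * _)%R.
  set S1' := (\sum_(j < K) w' j * _)%R.
  set T := (\sum_(K <= j < N) _)%R.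
  set T' := (\sum_(K <= j < N') _)%R.
  have T0 : (0 <= T)%R.
    rewrite /T big_nat_cond; apply: sumr_ge0 => j /andP[/andP[_ jN] _].
    by apply: mulr_ge0; [exact: w0 | apply: ee_ge0; exact: ltW].
  have T0' : (0 <= T')%R.
    rewrite /T' big_nat_cond; apply: sumr_ge0 => j /andP[/andP[_ jN] _].
    by apply: mulr_ge0; [exact: w0' | apply: ee_ge0; exact: ltW].
  rewrite (_ : (S1 + T - (S1' + T') = (S1 - S1') + (T - T'))%R); last first.
    by rewrite opprD addrACA.
  apply: (le_trans (ler_normD _ _)); rewrite -addrA; apply: lerD.
    rewrite /S1 /S1' -sumrB; apply: (le_trans (ler_norm_sum _ _ _)).
    apply: ler_sum => j _.
    have [zj zj'] := zK j (ltn_ord j).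
    have wj' : (0 <= w' j)%R by apply: w0'; exact: leq_trans (ltn_ord j) KN'.
    rewrite (_ : (w j * ee theta0 (z j) q - w' j * ee theta0 (z' j) q =
       (w j - w' j) * ee theta0 (z j) q + w' j * (ee theta0 (z j) q - ee theta0 (z' j) q))%R);
      last by ring.
    apply: (le_trans (ler_normD _ _)); apply: lerD.
      by rewrite normrM (ger0_norm (ee_ge0 theta0 (z j) q (ltW th0))).
    rewrite normrM (ger0_norm wj'); apply: ler_wpM2l => //.
    exact: ee_diff.
  apply: (le_trans (ler_normB _ _)).
  by rewrite (ger0_norm T0) (ger0_norm T0').
rewrite lee_fin /vB.
have e1 (a b : nat) (F : nat -> R) : (\sum_(a <= j < b) F j * 1 = \sum_(a <= j < b) F j)%R.
  by apply: eq_bigr => j _; rewrite mulr1.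
rewrite !e1.
rewrite (eq_bigr (fun j : 'I_K => `|w j - w' j| + w' j * (1 + c j))%R); last first.
  by move=> j _; rewrite !mulr1.
rewrite big_split /=.
apply: lerD => //; apply: lerD => //.
rewrite [leLHS]addrC lerD2r.
set Mx := \big[Num.max/0%R]_(j < K) (`|z j - z' j| / z j)%R.
have Mx0 : (0 <= Mx)%R.
  rewrite /Mx; apply: (big_ind (fun x => 0 <= x)%R) => //.
    by move=> x y x0 y0; rewrite le_max x0.
  move=> j _; have [zj _] := zK j (ltn_ord j).
  by apply: divr_ge0 => //; exact: ltW.
have sw1 : (\sum_(j < K) w' j <= 1)%R.
  rewrite -[X in (_ <= X)%R]sw' -!(big_mkord xpredT w').
  rewrite (big_cat_nat (leq0n K) KN') /= lerDl.
  rewrite big_nat_cond; apply: sumr_ge0 => j /andP[/andP[_ jN] _].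
  exact: w0'.
apply: (@le_trans _ _ (\sum_(j < K) w' j * (4 * Mx))%R).
  apply: ler_sum => j _.
  have [zj zj'] := zK j (ltn_ord j).
  have wj' : (0 <= w' j)%R by apply: w0'; exact: leq_trans (ltn_ord j) KN'.
  apply: ler_wpM2l => //.
  rewrite /c /m /M. apply: (le_trans (coef_le _ _ zj zj')).
  rewrite ler_pM2l //.
  exact: (le_bigmax 0%R (fun j : 'I_K => `|z j - z' j| / z j)%R j).
rewrite -mulr_suml -[X in (_ <= X)%R]mul1r.
apply: ler_wpM2r => //.
by apply: mulr_ge0.
Qed.
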